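(* Let $f:\mathbb{R}^n\to\mathbb{R}$ and $c:\mathbb{R}^n\to\mathbb{R}^m$ ($m<n$) be smooth, with $g(x)=\nabla f(x)$ and Jacobian $J(x)=\nabla c(x)\in\mathbb{R}^{m\times n}$. Suppose noisy evaluations $\tilde f,\tilde c,\tilde g,\tilde J$ satisfy, for all $x$, $|\tilde f(x)-f(x)|\le\epsilon_f$, $\|\tilde c(x)-c(x)\|_1\le\epsilon_c$, $\|\tilde g(x)-g(x)\|\le\epsilon_g$, $\|\tilde J(x)-J(x)\|_{1,2}\le\epsilon_J$. Let $\{x_k\}$ be a sequence of points with $\sigma_{\min}(J_k)\ge\gamma$ for all $k$, where $\gamma>\epsilon_J$, and set $\delta=1/(\gamma-\epsilon_J)$, $\eta=1/\gamma$. For $\beta_k>0$ let $d_k$ solve $\min_d\ \tfrac12\beta_k\|d\|^2+\tilde g_k^Td$ subject to $\tilde c_k+\tilde J_kd=0$. Fix $\tau\in(0,1)$ and suppose that at every iteration $k$ the penalty parameter $\pi_k>0$ satisfies $$\pi_k\ge\frac{1}{1-\tau}\big\|(\tilde J_k\tilde J_k^T)^{-1}\tilde J_k\tilde g_k\big\|_\infty.$$ Then, with $\ell(x_k;d_k)=g_k^Td_k+\pi_k\|c_k+J_kd_k\|_1-\pi_k\|c_k\|_1$, $$\ell(x_k;d_k)\le-\frac{1}{\beta_k}g_k^TP_kg_k+\frac{1}{\beta_k}\big(\|g_k\|^2\eta\epsilon_J+\epsilon_g\|g_k\|\big)-\tau\pi_k\|c_k\|_1+\epsilon_g\delta(\|c_k\|_1+\epsilon_c)$$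 $$\qquad+\pi_k\Big((2-\tau)\epsilon_c+\epsilon_J\Big(\delta(\|c_k\|_1+\epsilon_c)+\frac{1}{\beta_k}\big(\|P_kg_k\|+\|g_k\|\eta\epsilon_J+\epsilon_g\big)\Big)\Big).$$
   Context: $\|\cdot\|$ denotes the Euclidean norm; $\|\cdot\|_{1,2}$ is the matrix norm $\sup_{x\ne0}\|Ax\|_1/\|x\|$ for $A\in\mathbb{R}^{m\times n}$; $\sigma_{\min}$ is the smallest singular value. Subscript $k$ denotes evaluation at $x_k$: $g_k=g(x_k)$, $c_k=c(x_k)$, $J_k=J(x_k)$, $\tilde g_k=\tilde g(x_k)$, $\tilde c_k=\tilde c(x_k)$, $\tilde J_k=\tilde J(x_k)$. $P_k=I-J_k^T(J_kJ_k^T)^{-1}J_k$ is the orthogonal projection onto the null space of $J_k$. *)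

(* Defs.v *)
From HB Require Import structures.
From mathcomp Require Import all_boot all_order all_algebra.
From mathcomp Require Import all_classical all_reals all_analysis.
Set Implicit Arguments. Unset Strict Implicit. Unset Printing Implicit Defensive.
Import Order.TTheory GRing.Theory Num.Theory.
Import numFieldNormedType.Exports.
Local Open Scope ring_scope.
Local Open Scope classical_set_scope.

Section Defs.
Variable R : realType.

Definition dotv n (u v : 'cV[R]_n) : R := \sum_(i < n) u i 0 * v i 0.
Definition norm2 n (v : 'cV[R]_n) : R := Num.sqrt (dotv v v).
Definition norm1 n (v : 'cV[R]_n) : R := \sum_(i < n) `|v i 0|.
Definition normInf n (v : 'cV[R]_n) : R := \big[Num.max/0]_(i < n) `|v i 0|.
Definition opnorm12 m n (A : 'M[R]_(m, n)) : R :=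
  sup [set norm1 (A *m x) / norm2 x | x in [set x : 'cV[R]_n | x != 0]].
Definition sigma_min m n (A : 'M[R]_(m, n)) : R :=
  Num.sqrt (inf [set a : R | eigenvalue (A *m A^T) a]).
Definition nullproj m n (A : 'M[R]_(m, n)) : 'M[R]_n :=
  1%:M - A^T *m invmx (A *m A^T) *m A.
Definition qp_solution m n (beta : R) (gt : 'cV[R]_n) (ct : 'cV[R]_m)
  (Jt : 'M[R]_(m, n)) (d : 'cV[R]_n) : Prop :=
  ct + Jt *m d = 0 /\
  forall d' : 'cV[R]_n, ct + Jt *m d' = 0 ->
    beta / 2 * norm2 d ^+ 2 + dotv gt d <= beta / 2 * norm2 d' ^+ 2 + dotv gt d'.
End Defs.

(* Main.v *)
Require Import Defs.
From HB Require Import structures.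
From mathcomp Require Import all_boot all_order all_algebra.
From mathcomp Require Import all_classical all_reals all_analysis.
From mathcomp Require Import ring lra.
Import Order.TTheory GRing.Theory Num.Theory.
Import numFieldNormedType.Exports.
Set Implicit Arguments. Unset Strict Implicit. Unset Printing Implicit Defensive.
Local Open Scope ring_scope.

Section Basics.
Variable R : realType.
Implicit Types (n m : nat).

Lemma dotvE n (u v : 'cV[R]_n) : dotv u v = (u^T *m v) 0 0.
Proof. by rewrite /dotv mxE; apply: eq_bigr => i _; rewrite mxE. Qed.

Lemma dotvC n (u v : 'cV[R]_n) : dotv u v = dotv v u.
Proof. by rewrite /dotv; apply: eq_bigr => i _; rewrite mulrC. Qed.

Lemma dotvDl n (u v w : 'cV[R]_n) : dotv (u + v) w = dotv u w + dotv v w.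
Proof. by rewrite /dotv -big_split; apply: eq_bigr => i _; rewrite !mxE mulrDl. Qed.

Lemma dotvDr n (u v w : 'cV[R]_n) : dotv w (u + v) = dotv w u + dotv w v.
Proof. by rewrite dotvC dotvDl !(dotvC w). Qed.

Lemma dotvZl n a (u w : 'cV[R]_n) : dotv (a *: u) w = a * dotv u w.
Proof. by rewrite /dotv mulr_sumr; apply: eq_bigr => i _; rewrite !mxE mulrA. Qed.

Lemma dotvZr n a (u w : 'cV[R]_n) : dotv w (a *: u) = a * dotv w u.
Proof. by rewrite dotvC dotvZl dotvC. Qed.

Lemma dotvNl n (u w : 'cV[R]_n) : dotv (- u) w = - dotv u w.
Proof. by rewrite -scaleN1r dotvZl mulN1r. Qed.

Lemma dotvNr n (u w : 'cV[R]_n) : dotv w (- u) = - dotv w u.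
Proof. by rewrite dotvC dotvNl dotvC. Qed.

Lemma dotvBl n (u v w : 'cV[R]_n) : dotv (u - v) w = dotv u w - dotv v w.
Proof. by rewrite dotvDl dotvNl. Qed.

Lemma dotvBr n (u v w : 'cV[R]_n) : dotv w (u - v) = dotv w u - dotv w v.
Proof. by rewrite dotvDr dotvNr. Qed.

Lemma dotv0l n (w : 'cV[R]_n) : dotv 0 w = 0.
Proof. by rewrite -(scale0r (0 : 'cV[R]_n)) dotvZl mul0r. Qed.

Lemma dotv0r n (w : 'cV[R]_n) : dotv w 0 = 0.
Proof. by rewrite dotvC dotv0l. Qed.

Lemma dotv_mul m n (A : 'M[R]_(m, n)) (u : 'cV[R]_m) (v : 'cV[R]_n) :
  dotv u (A *m v) = dotv (A^T *m u) v.
Proof. by rewrite !dotvE trmx_mul trmxK mulmxA. Qed.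

Lemma dotv_ge0 n (v : 'cV[R]_n) : 0 <= dotv v v.
Proof. by rewrite /dotv; apply: sumr_ge0 => i _; rewrite -expr2 sqr_ge0. Qed.

Lemma dotv_eq0 n (v : 'cV[R]_n) : dotv v v = 0 -> v = 0.
Proof.
move=> h; apply/matrixP => i j; rewrite (ord1 j) mxE.
have := h; rewrite /dotv => /eqP; rewrite psumr_eq0 => [/allP H|k _]; last by rewrite -expr2 sqr_ge0.
by have := H i (mem_index_enum _); rewrite -expr2 sqrf_eq0 => /eqP.
Qed.

Lemma norm2_ge0 n (v : 'cV[R]_n) : 0 <= norm2 v.
Proof. exact: sqrtr_ge0. Qed.

Lemma norm2_sq n (v : 'cV[R]_n) : norm2 v ^+ 2 = dotv v v.
Proof. by rewrite /norm2 sqr_sqrtr // dotv_ge0. Qed.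

Lemma norm2_eq0 n (v : 'cV[R]_n) : norm2 v = 0 -> v = 0.
Proof. by move=> h; apply: dotv_eq0; rewrite -norm2_sq h expr0n. Qed.

Lemma norm2_0 n : norm2 (0 : 'cV[R]_n) = 0.
Proof. by rewrite /norm2 dotv0l sqrtr0. Qed.

Lemma sq_le (a b : R) : 0 <= b -> a ^+ 2 <= b ^+ 2 -> a <= b.
Proof. move=> hb h; nra. Qed.

Lemma CS2 n (u v : 'cV[R]_n) : dotv u v ^+ 2 <= dotv u u * dotv v v.
Proof.
have [v0|vn0] := eqVneq (dotv v v) 0.
  by rewrite v0 mulr0 (dotv_eq0 v0) dotv0r expr0n.
have hv : 0 < dotv v v by rewrite lt_def vn0 dotv_ge0.
set t := dotv u v / dotv v v.
have E : dotv (u - t *: v) (u - t *: v) = dotv u u - 2 * t * dotv u v + t ^+ 2 * dotv v v.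
  by rewrite !(dotvBl, dotvBr, dotvZl, dotvZr) (dotvC v u); ring.
have H := dotv_ge0 (u - t *: v); rewrite E in H.
have tc : t * dotv v v = dotv u v by rewrite /t mulfVK.
nra.
Qed.

Lemma CS n (u v : 'cV[R]_n) : dotv u v <= norm2 u * norm2 v.
Proof.
have := CS2 u v; rewrite -!norm2_sq => h.
have h1 := norm2_ge0 u; have h2 := norm2_ge0 v.
apply: le_trans (ler_norm _) _; apply: sq_le; first by rewrite mulr_ge0.
by rewrite real_normK ?num_real // exprMn.
Qed.

Lemma CSabs n (u v : 'cV[R]_n) : `|dotv u v| <= norm2 u * norm2 v.
Proof.
have := CS2 u v; rewrite -!norm2_sq => h.
have h1 := norm2_ge0 u; have h2 := norm2_ge0 v.
apply: sq_le; first by rewrite mulr_ge0.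
by rewrite real_normK ?num_real // exprMn.
Qed.

Lemma norm2_sqD n (u v : 'cV[R]_n) :
  norm2 (u + v) ^+ 2 = norm2 u ^+ 2 + 2 * dotv u v + norm2 v ^+ 2.
Proof. by rewrite !norm2_sq !(dotvDl, dotvDr) (dotvC v u); ring. Qed.

Lemma norm2_triangle n (u v : 'cV[R]_n) : norm2 (u + v) <= norm2 u + norm2 v.
Proof.
apply: sq_le; first by rewrite addr_ge0 ?norm2_ge0.
rewrite norm2_sqD; have := CS u v; nra.
Qed.

Lemma norm2Z n a (v : 'cV[R]_n) : norm2 (a *: v) = `|a| * norm2 v.
Proof.
by rewrite /norm2 dotvZl dotvZr mulrA -expr2 sqrtrM ?sqr_ge0 // sqrtr_sqr.
Qed.

Lemma norm2N n (v : 'cV[R]_n) : norm2 (- v) = norm2 v.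
Proof. by rewrite -scaleN1r norm2Z normrN1 mul1r. Qed.

Lemma norm2_sub n (u v : 'cV[R]_n) : norm2 (u - v) <= norm2 u + norm2 v.
Proof. by rewrite -(norm2N v); apply: norm2_triangle. Qed.

End Basics.
Section Norms.
Variable R : realType.
Local Open Scope classical_set_scope.
Local Open Scope ring_scope.

Lemma norm1_ge0 n (v : 'cV[R]_n) : 0 <= norm1 v.
Proof. by apply: sumr_ge0 => i _. Qed.

Lemma norm1_triangle n (u v : 'cV[R]_n) : norm1 (u + v) <= norm1 u + norm1 v.
Proof.
rewrite /norm1 -big_split /=; apply: ler_sum => i _; rewrite mxE; exact: ler_normD.
Qed.

Lemma norm1N n (v : 'cV[R]_n) : norm1 (- v) = norm1 v.
Proof. by apply: eq_bigr => i _; rewrite mxE normrN. Qed.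

Lemma norm1_sub n (u v : 'cV[R]_n) : norm1 (u - v) <= norm1 u + norm1 v.
Proof. by rewrite -(norm1N v); apply: norm1_triangle. Qed.

Lemma norm2_le_norm1 n (v : 'cV[R]_n) : norm2 v <= norm1 v.
Proof.
apply: sq_le; first exact: norm1_ge0.
rewrite norm2_sq /dotv /norm1 expr2 big_distrlr /=.
apply: ler_sum => i _.
rewrite (bigD1 i) //= -normrM -[X in X <= _]addr0.
apply: lerD; first exact: ler_norm.
by apply: sumr_ge0 => j _; rewrite mulr_ge0.
Qed.

Lemma le_normInf n (v : 'cV[R]_n) i : `|v i 0| <= normInf v.
Proof. by apply/bigmax_geP; right; exists i. Qed.

Lemma dotv_inf1 n (u v : 'cV[R]_n) : `|dotv u v| <= normInf u * norm1 v.
Proof.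
rewrite /dotv /norm1 mulr_sumr; apply: le_trans (ler_norm_sum _ _ _) _.
apply: ler_sum => i _; rewrite normrM ler_wpM2r //; exact: le_normInf.
Qed.

Lemma mulmx_dotv m n (A : 'M[R]_(m, n)) (x : 'cV[R]_n) i :
  (A *m x) i 0 = dotv (row i A)^T x.
Proof. by rewrite mxE /dotv; apply: eq_bigr => j _; rewrite !mxE. Qed.

Lemma mx_bound1 m n (A : 'M[R]_(m, n)) :
  exists K, 0 <= K /\ forall x, norm1 (A *m x) <= K * norm2 x.
Proof.
exists (\sum_(i < m) norm2 (row i A)^T); split.
  by apply: sumr_ge0 => i _; exact: norm2_ge0.
move=> x; rewrite /norm1 mulr_suml; apply: ler_sum => i _.
rewrite mulmx_dotv; exact: CSabs.
Qed.

Lemma mx_bound2 m n (A : 'M[R]_(m, n)) :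
  exists K, 0 < K /\ forall x, norm2 (A *m x) <= K * norm2 x.
Proof.
have [K [K0 HK]] := mx_bound1 A; exists (K + 1); split; first by lra.
move=> x; apply: le_trans (norm2_le_norm1 _) _; apply: le_trans (HK x) _.
by rewrite ler_wpM2r ?norm2_ge0 //; lra.
Qed.

Lemma opnorm12_le m n (A : 'M[R]_(m, n)) (x : 'cV[R]_n) :
  norm1 (A *m x) <= opnorm12 A * norm2 x.
Proof.
have [->|xn0] := eqVneq x 0.
  by rewrite mulmx0 norm2_0 mulr0 /norm1 big1 // => i _; rewrite mxE normr0.
have nx : 0 < norm2 x.
  by rewrite lt_def norm2_ge0 andbT; apply/eqP => /norm2_eq0 /eqP; rewrite (negbTE xn0).
rewrite -ler_pdivrMr //; apply: ub_le_sup; last by exists x.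
have [K [K0 HK]] := mx_bound1 A.
exists K => _ [y /= yn0 <-].
have ny : 0 < norm2 y.
  by rewrite lt_def norm2_ge0 andbT; apply/eqP => /norm2_eq0 /eqP; rewrite (negbTE yn0).
by rewrite ler_pdivrMr.
Qed.

End Norms.
Section Proj.
Variable R : realType.
Local Open Scope ring_scope.
Variables (m n : nat) (J : 'M[R]_(m, n)).
Hypothesis hM : J *m J^T \in unitmx.

Let Mi := invmx (J *m J^T).
Definition Qm := J^T *m Mi *m J.

Lemma Mi_tr : Mi^T = Mi.
Proof. by rewrite /Mi trmx_inv trmx_mul trmxK. Qed.

Lemma nullprojE : nullproj J = 1%:M - Qm.
Proof. by []. Qed.

Lemma JQ : J *m Qm = J.
Proof. by rewrite /Qm !mulmxA mulmxV // mul1mx. Qed.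

Lemma QJt : Qm *m J^T = J^T.
Proof. by rewrite /Qm -!mulmxA mulVmx // mulmx1. Qed.

Lemma JP : J *m nullproj J = 0.
Proof. by rewrite nullprojE mulmxBr mulmx1 JQ subrr. Qed.

Lemma P_orth (x : 'cV[R]_n) (w : 'cV[R]_m) : dotv (nullproj J *m x) (J^T *m w) = 0.
Proof. by rewrite dotv_mul trmxK mulmxA JP mul0mx dotv0l. Qed.

Lemma Qx_E (x : 'cV[R]_n) : Qm *m x = J^T *m (Mi *m J *m x).
Proof. by rewrite /Qm !mulmxA. Qed.

Lemma PQ_split (x : 'cV[R]_n) : x = nullproj J *m x + Qm *m x.
Proof. by rewrite nullprojE mulmxBl mul1mx subrK. Qed.

Lemma PQ_orth (x y : 'cV[R]_n) : dotv (nullproj J *m x) (Qm *m y) = 0.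
Proof. by rewrite Qx_E P_orth. Qed.

Lemma pythag (x : 'cV[R]_n) :
  norm2 x ^+ 2 = norm2 (nullproj J *m x) ^+ 2 + norm2 (Qm *m x) ^+ 2.
Proof. by rewrite {1}(PQ_split x) norm2_sqD PQ_orth mulr0 addr0. Qed.

Lemma dotv_P (x : 'cV[R]_n) : dotv x (nullproj J *m x) = norm2 (nullproj J *m x) ^+ 2.
Proof. by rewrite {1}(PQ_split x) dotvDl (dotvC (Qm *m x)) PQ_orth addr0 norm2_sq. Qed.

Lemma P_le (x : 'cV[R]_n) : norm2 (nullproj J *m x) <= norm2 x.
Proof.
apply: sq_le; first exact: norm2_ge0.
by rewrite (pythag x) lerDl sqr_ge0.
Qed.

Lemma Q_le (x : 'cV[R]_n) : norm2 (Qm *m x) <= norm2 x.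
Proof.
apply: sq_le; first exact: norm2_ge0.
by rewrite (pythag x) lerDr sqr_ge0.
Qed.

Lemma P_min (x : 'cV[R]_n) (w : 'cV[R]_m) : norm2 (nullproj J *m x) <= norm2 (x - J^T *m w).
Proof.
apply: sq_le; first exact: norm2_ge0.
have -> : x - J^T *m w = nullproj J *m x + J^T *m (Mi *m J *m x - w).
  by rewrite mulmxBr -Qx_E addrA -PQ_split.
by rewrite norm2_sqD P_orth mulr0 addr0 lerDl sqr_ge0.
Qed.

Lemma Q_tr : Qm^T = Qm.
Proof. by rewrite /Qm !trmx_mul trmxK Mi_tr mulmxA. Qed.

Lemma P_tr : (nullproj J)^T = nullproj J.
Proof. by rewrite nullprojE linearB /= trmx1 Q_tr. Qed.

Lemma PJt : nullproj J *m J^T = 0.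
Proof. by rewrite -P_tr -trmx_mul JP trmx0. Qed.

Lemma JJMi (c : 'cV[R]_m) : J *m J^T *m (Mi *m c) = c.
Proof. by rewrite mulmxA mulmxV // mul1mx. Qed.

Lemma dotv_Psym (x y : 'cV[R]_n) : dotv x (nullproj J *m y) = dotv (nullproj J *m x) y.
Proof. by rewrite dotv_mul P_tr. Qed.

End Proj.

Section Unit.
Variable R : realType.
Local Open Scope ring_scope.

Lemma inj_unit k (A : 'M[R]_k) : (forall w : 'cV[R]_k, A *m w = 0 -> w = 0) -> A \in unitmx.
Proof.
move=> H; apply/negPn/negP => hA.
have : kermx A^T != 0 by rewrite kermx_eq0 row_free_unit unitmx_tr.
set K := kermx A^T => Kn0.
have [i hi] : exists i, row i K != 0.
  apply/existsP; move: Kn0; apply: contraR; rewrite negb_exists => /forallP h.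
  by apply/eqP/row_matrixP => i; rewrite row0; apply/eqP; move: (h i); rewrite negbK.
have : (row i K <= K)%MS by exact: row_sub.
rewrite sub_kermx => /eqP h.
have : A *m (row i K)^T = 0 by rewrite -(trmxK A) -trmx_mul h trmx0.
move/H => /(congr1 trmx); rewrite trmxK trmx0 => e.
by rewrite e eqxx in hi.
Qed.
End Unit.

Lemma unit_from_lb (R : realType) m n (A : 'M[R]_(m, n)) (a : R) : 0 < a ->
  (forall w, a * norm2 w <= norm2 (A^T *m w)) -> A *m A^T \in unitmx.
Proof.
move=> a0 H; apply: inj_unit => w hw.
have : dotv w (A *m A^T *m w) = 0 by rewrite hw dotv0r.
rewrite -mulmxA dotv_mul -norm2_sq => /eqP; rewrite sqrf_eq0 => /eqP h.
have := H w; rewrite h => h2.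
apply: norm2_eq0; apply/eqP; rewrite eq_le norm2_ge0 andbT.
by rewrite -(pmulr_rle0 _ a0).
Qed.

Section Spec.
Variable R : realType.
Local Open Scope classical_set_scope.
Local Open Scope ring_scope.

Lemma norm2_gt0 n (v : 'cV[R]_n) : v != 0 -> 0 < norm2 v.
Proof.
by move=> vn0; rewrite lt_def norm2_ge0 andbT; apply/eqP => /norm2_eq0 /eqP; rewrite (negbTE vn0).
Qed.

Lemma norm2_unit n (v : 'cV[R]_n) : v != 0 -> norm2 ((norm2 v)^-1 *: v) = 1.
Proof.
move=> vn0; have h := norm2_gt0 vn0.
by rewrite norm2Z ger0_norm ?invr_ge0 ?norm2_ge0 // mulVf // gt_eqF.
Qed.

Lemma spec_bound m n (J : 'M[R]_(m, n)) (gamma : R) :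
  0 < gamma -> gamma <= sigma_min J ->
  forall w : 'cV[R]_m, gamma * norm2 w <= norm2 (J^T *m w).
Proof.
move=> g0 hs.
case: m J hs => [|m] J hs w.
  by rewrite (flatmx0 w) norm2_0 mulr0 norm2_ge0.
set S := [set norm2 (J^T *m w) ^+ 2 | w in [set w : 'cV[R]_m.+1 | norm2 w = 1]].
set mu := inf S.
have w1 : exists w : 'cV[R]_m.+1, norm2 w = 1.
  have c0 : (const_mx 1 : 'cV[R]_m.+1) != 0.
    by apply/eqP => /matrixP /(_ 0 0); rewrite !mxE => /eqP; rewrite oner_eq0.
  by exists ((norm2 (const_mx 1 : 'cV[R]_m.+1))^-1 *: const_mx 1); rewrite norm2_unit.
have Sn0 : S !=set0.
  by have [w0 hw0] := w1; exists (norm2 (J^T *m w0) ^+ 2); exists w0.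
have Slb : has_lbound S by exists 0 => _ [y _ <-]; exact: sqr_ge0.
have mu0 : 0 <= mu by apply: lb_le_inf => // _ [y _ <-]; exact: sqr_ge0.
have C1 : forall v : 'cV[R]_m.+1, mu * norm2 v ^+ 2 <= norm2 (J^T *m v) ^+ 2.
  move=> v; have [->|vn0] := eqVneq v 0.
    by rewrite norm2_0 expr0n mulr0 sqr_ge0.
  have hv := norm2_gt0 vn0.
  have : mu <= norm2 (J^T *m ((norm2 v)^-1 *: v)) ^+ 2.
    by apply: ge_inf => //; exists ((norm2 v)^-1 *: v) => //=; rewrite norm2_unit.
  rewrite -scalemxAr norm2Z ger0_norm ?invr_ge0 ?norm2_ge0 // exprMn exprVn.
  by rewrite mulrC ler_pdivlMr ?exprn_gt0.
have C2 : eigenvalue (J *m J^T) mu.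
  case: (boolP (eigenvalue (J *m J^T) mu)) => // hne; exfalso.
  set B := J *m J^T - mu%:M.
  have Bu : B \in unitmx.
    by rewrite -row_free_unit -kermx_eq0; move: hne; rewrite /eigenvalue /eigenspace negbK.
  have Bt : B^T = B by rewrite /B linearB /= trmx_mul trmxK tr_scalar_mx.
  have qE : forall v, dotv v (B *m v) = norm2 (J^T *m v) ^+ 2 - mu * norm2 v ^+ 2.
    move=> v; rewrite /B mulmxBl dotvBr -mulmxA dotv_mul norm2_sq mul_scalar_mx dotvZr.
    by rewrite norm2_sq.
  have q0 : forall v, 0 <= dotv v (B *m v) by move=> v; rewrite qE subr_ge0 C1.
  have [K [K0 HK]] := mx_bound2 B.
  have [K' [K'0 HK']] := mx_bound2 (invmx B).
  have key : forall v, norm2 v = 1 -> 1 <= K' ^+ 2 * K * dotv v (B *m v).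
    move=> v hv.
    have h1 : 1 <= K' * norm2 (B *m v).
      by rewrite -hv; apply: le_trans (HK' _); rewrite mulmxA mulVmx // mul1mx.
    set z := B *m v.
    have E : dotv (v - K^-1 *: z) (B *m (v - K^-1 *: z)) =
       dotv v z - 2 * K^-1 * norm2 z ^+ 2 + K^-1 ^+ 2 * dotv z (B *m z).
      rewrite mulmxBr -scalemxAr !(dotvBl, dotvBr, dotvZl, dotvZr).
      have -> : dotv v (B *m z) = dotv z z by rewrite dotv_mul Bt.
      have -> : dotv z (B *m v) = dotv z z by [].
      rewrite norm2_sq; ring.
    have h2 := q0 (v - K^-1 *: z); rewrite E in h2.
    have h3 : dotv z (B *m z) <= K * norm2 z ^+ 2.
      apply: le_trans (CS _ _) _.
      have := HK z; have := norm2_ge0 z; have := norm2_ge0 (B *m z); nra.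
    have h4 : norm2 z ^+ 2 <= K * dotv v z.
      set a := K^-1 in h2 *.
      have kk : a * K = 1 by rewrite /a mulVf // gt_eqF.
      have h5 := ler_wpM2l (sqr_ge0 a) h3.
      have e5 : a ^+ 2 * (K * norm2 z ^+ 2) = a * norm2 z ^+ 2.
        by rewrite expr2 -mulrA (mulrA a K) kk mul1r.
      rewrite e5 in h5.
      have h6 : a * norm2 z ^+ 2 <= dotv v z by lra.
      have := ler_wpM2l (ltW K0) h6.
      by rewrite mulrA (mulrC K a) kk mul1r.
    have hz := norm2_ge0 z.
    have : 1 <= K' ^+ 2 * norm2 z ^+ 2.
      by rewrite -exprMn; have := h1; nra.
    nra.
  set eps := (K' ^+ 2 * K)^-1.
  have e0 : 0 < eps by rewrite invr_gt0 mulr_gt0 ?exprn_gt0.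
  have : mu + eps <= mu.
    apply: lb_le_inf => // _ [v hv <-].
    have := key v hv; rewrite qE hv expr1n mulr1 => h.
    have c : 0 < K' ^+ 2 * K by rewrite mulr_gt0 ?exprn_gt0.
    by rewrite -lerBrDl /eps -(ler_pM2l c) mulfV ?gt_eqF.
  lra.
have C3 : sigma_min J <= Num.sqrt mu.
  rewrite /sigma_min ler_sqrt //; apply: ge_inf => //.
  exists 0 => l /eigenvalueP [v hv vn0].
  set u := v^T.
  have hu : u != 0 by apply: contra vn0 => /eqP h; rewrite -(trmxK v) -/u h trmx0.
  have : dotv u ((J *m J^T) *m u) = l * norm2 u ^+ 2.
    have sym : (J *m J^T)^T = J *m J^T by rewrite trmx_mul trmxK.
    have -> : (J *m J^T) *m u = (v *m (J *m J^T))^T by rewrite trmx_mul sym.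
    by rewrite hv linearZ /= dotvZr norm2_sq.
  rewrite -mulmxA dotv_mul norm2_sq => h.
  have hu2 := norm2_gt0 hu.
  have := dotv_ge0 (J^T *m u); rewrite h.
  have hp : 0 < norm2 u ^+ 2 by rewrite exprn_gt0.
  by rewrite -norm2_sq (pmulr_lge0 _ hp).
have gm : gamma ^+ 2 <= mu.
  have := le_trans hs C3 => h.
  by rewrite -(sqr_sqrtr mu0); rewrite lerXn2r ?nnegrE ?sqrtr_ge0 // ltW.
apply: sq_le; first exact: norm2_ge0.
apply: le_trans (C1 w); rewrite exprMn ler_wpM2r ?sqr_ge0 //.
Qed.
End Spec.
Section Scalar.
Variable R : realType.
Local Open Scope ring_scope.

Lemma scalar_key (U V Rr A Y th : R) :
  0 <= U -> 0 <= V -> 0 <= Rr -> 0 <= A -> 0 <= Y -> 0 <= th -> th < 1 ->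
  Y ^+ 2 = Rr ^+ 2 + U ^+ 2 -> Rr <= th * Y -> U ^+ 2 - Rr * V <= Y * A ->
  U ^+ 2 - A ^+ 2 <= th * (U ^+ 2 + V ^+ 2).
Proof.
move=> U0 V0 R0 A0 Y0 t0 t1 hY hR hA.
have [Yz|Yp] := eqVneq Y 0.
  have : Rr ^+ 2 + U ^+ 2 = 0 by rewrite -hY Yz expr0n.
  move=> h; have hU : U ^+ 2 = 0 by have := sqr_ge0 Rr; have := sqr_ge0 U; lra.
  rewrite hU; have := sqr_ge0 A; have := sqr_ge0 V; nra.
have Ypos : 0 < Y by rewrite lt_def Yp Y0.
have [hneg|hpos] := lerP (U ^+ 2 - Rr * V) 0.
  have h1 : Rr ^+ 2 * (1 - th ^+ 2) <= th ^+ 2 * U ^+ 2.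
    have : Rr ^+ 2 <= th ^+ 2 * Y ^+ 2.
      by rewrite -exprMn; apply: lerXn2r => //; rewrite nnegrE ?mulr_ge0.
    rewrite hY; lra.
  have h2 : U ^+ 2 * U ^+ 2 <= Rr ^+ 2 * V ^+ 2.
    have h3 : U ^+ 2 <= Rr * V by lra.
    have := sqr_ge0 U; nra.
  have h4 : U ^+ 2 * U ^+ 2 * (1 - th ^+ 2) <= th ^+ 2 * U ^+ 2 * V ^+ 2.
    have c : 0 <= 1 - th ^+ 2 by nra.
    have := ler_wpM2r c h2; have := ler_wpM2r (sqr_ge0 V) h1; nra.
  have [Uz|Up] := eqVneq U 0.
    rewrite Uz expr0n /= sub0r; have := sqr_ge0 A; have := sqr_ge0 V; nra.
  have U2 : 0 < U ^+ 2 by rewrite exprn_gt0 // lt_def Up U0.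
  have h5 : U ^+ 2 * (1 - th ^+ 2) <= th ^+ 2 * V ^+ 2.
    rewrite -(ler_pM2l U2); nra.
  have h6 : U ^+ 2 * (1 - th) <= th * V ^+ 2.
    have : U ^+ 2 * (1 - th) * (1 + th) <= th * V ^+ 2 * (1 + th).
      have := sqr_ge0 V; nra.
    rewrite ler_pM2r //; lra.
  have := sqr_ge0 A; lra.
have hA2 : (U ^+ 2 - Rr * V) ^+ 2 <= Y ^+ 2 * A ^+ 2.
  by rewrite -exprMn; apply: lerXn2r => //; rewrite nnegrE ?mulr_ge0 // ltW.
set X := U ^+ 2 * Rr + 2 * U ^+ 2 * V - Rr * V ^+ 2.
have kX : (Y + Rr) * (Y * (U ^+ 2 + V ^+ 2) - X) = (U ^+ 2 - V * (Y + Rr)) ^+ 2.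
  rewrite /X; have -> : U ^+ 2 = Y ^+ 2 - Rr ^+ 2 by rewrite hY; ring.
  ring.
have hX : X <= Y * (U ^+ 2 + V ^+ 2).
  have : 0 <= (Y + Rr) * (Y * (U ^+ 2 + V ^+ 2) - X) by rewrite kX sqr_ge0.
  rewrite pmulr_rge0 ?subr_ge0 //; lra.
have e1 : U ^+ 2 * Y ^+ 2 - (U ^+ 2 - Rr * V) ^+ 2 = Rr * X.
  rewrite /X hY; ring.
have h7 : Rr * X <= th * Y ^+ 2 * (U ^+ 2 + V ^+ 2).
  have := ler_wpM2l R0 hX => h.
  apply: le_trans h _.
  have : Rr * Y <= th * Y * Y by rewrite ler_wpM2r.
  have := sqr_ge0 U; have := sqr_ge0 V; nra.
have h8 : (U ^+ 2 - A ^+ 2) * Y ^+ 2 <= th * (U ^+ 2 + V ^+ 2) * Y ^+ 2 by nra.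
by rewrite ler_pM2r ?exprn_gt0 in h8.
Qed.
End Scalar.

Unset Implicit Arguments. Set Strict Implicit.

Theorem lemma3p2 (R : realType) (m n : nat) (hmn : (m < n)%N)
  (f : 'cV[R]_n -> R) (c : 'cV[R]_n -> 'cV[R]_m)
  (g : 'cV[R]_n -> 'cV[R]_n) (J : 'cV[R]_n -> 'M[R]_(m, n))
  (hg : forall x, differentiable f x /\ forall v, 'd f x v = dotv (g x) v)
  (hJ : forall x, differentiable c x /\ forall v, 'd c x v = J x *m v)
  (ft : 'cV[R]_n -> R) (ct : 'cV[R]_n -> 'cV[R]_m)
  (gt : 'cV[R]_n -> 'cV[R]_n) (Jt : 'cV[R]_n -> 'M[R]_(m, n))
  (epsf epsc epsg epsJ : R)
  (hf_err : forall x, `|ft x - f x| <= epsf)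
  (hc_err : forall x, norm1 (ct x - c x) <= epsc)
  (hg_err : forall x, norm2 (gt x - g x) <= epsg)
  (hJ_err : forall x, opnorm12 (Jt x - J x) <= epsJ)
  (x : nat -> 'cV[R]_n) (gamma : R)
  (hsig : forall k, sigma_min (J (x k)) >= gamma)
  (hgamma : gamma > epsJ)
  (beta : nat -> R) (hbeta : forall k, 0 < beta k)
  (d : nat -> 'cV[R]_n)
  (hd : forall k, qp_solution (beta k) (gt (x k)) (ct (x k)) (Jt (x k)) (d k))
  (tau : R) (htau0 : 0 < tau) (htau1 : tau < 1)
  (pi : nat -> R) (hpi0 : forall k, 0 < pi k)
  (hpi : forall k, pi k >= (1 - tau)^-1 *
     normInf (invmx (Jt (x k) *m (Jt (x k))^T) *m Jt (x k) *m gt (x k))) :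
  let delta := (gamma - epsJ)^-1 in
  let eta := gamma^-1 in
  forall k : nat,
  let gk := g (x k) in let ck := c (x k) in let Jk := J (x k) in
  let Pk := nullproj Jk in
  dotv gk (d k) + pi k * norm1 (ck + Jk *m d k) - pi k * norm1 ck
  <= - (beta k)^-1 * dotv gk (Pk *m gk)
     + (beta k)^-1 * (norm2 gk ^+ 2 * eta * epsJ + epsg * norm2 gk)
     - tau * pi k * norm1 ck
     + epsg * delta * (norm1 ck + epsc)
     + pi k * ((2 - tau) * epsc
               + epsJ * (delta * (norm1 ck + epsc)
                         + (beta k)^-1 * (norm2 (Pk *m gk) + norm2 gk * eta * epsJ + epsg))).
Proof.
move=> delta eta k; cbv zeta.
set gk := g (x k); set ck := c (x k); set Jk := J (x k); set Pk := nullproj Jk.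
set Jt' := Jt (x k). set gt' := gt (x k). set ct' := ct (x k).
have n0 : (0 < n)%N by apply: leq_ltn_trans hmn.
set E := Jt' - Jk.
have hE : forall v, norm1 (E *m v) <= epsJ * norm2 v.
  by move=> v; apply: le_trans (opnorm12_le E v) _; rewrite ler_wpM2r ?norm2_ge0 ?hJ_err.
have eJ0 : 0 <= epsJ.
  set x0 : 'cV[R]_n := const_mx 1.
  have c0 : x0 != 0.
    by apply/eqP => /matrixP /(_ (Ordinal n0) 0); rewrite !mxE => /eqP; rewrite oner_eq0.
  have := hE x0; have := norm1_ge0 (E *m x0); have := norm2_gt0 c0; nra.
have eg0 : 0 <= epsg := le_trans (norm2_ge0 _) (hg_err (x k)).
have ec0 : 0 <= epsc := le_trans (norm1_ge0 _) (hc_err (x k)).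
have g0 : 0 < gamma by apply: le_lt_trans hgamma.
have N1 : forall v, norm2 (E *m v) <= epsJ * norm2 v.
  by move=> v; apply: le_trans (norm2_le_norm1 _) (hE v).
have N2 : forall w, norm2 (E^T *m w) <= epsJ * norm2 w.
  move=> w; set z := E^T *m w.
  have h : norm2 z ^+ 2 <= norm2 w * (epsJ * norm2 z).
    rewrite norm2_sq {1}/z -dotv_mul.
    by apply: le_trans (CS _ _) _; rewrite ler_wpM2l ?norm2_ge0.
  have [z0|zp] := eqVneq (norm2 z) 0; first by rewrite z0 mulr_ge0 ?norm2_ge0.
  have zpos : 0 < norm2 z by rewrite lt_def zp norm2_ge0.
  rewrite -(ler_pM2l zpos) -expr2; apply: le_trans h _.
  lra.
have S : forall w, gamma * norm2 w <= norm2 (Jk^T *m w) := spec_bound g0 (hsig k).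
have St : forall w, (gamma - epsJ) * norm2 w <= norm2 (Jt'^T *m w).
  move=> w.
  have e : Jk^T *m w = Jt'^T *m w - E^T *m w.
    by rewrite /E linearB /= mulmxBl opprB addrCA subrr addr0.
  have := S w; rewrite e => h.
  have := norm2_sub (Jt'^T *m w) (E^T *m w); have := N2 w; lra.
have gp : 0 < gamma - epsJ by rewrite subr_gt0.
have MJ : Jk *m Jk^T \in unitmx := unit_from_lb g0 S.
have MJt : Jt' *m Jt'^T \in unitmx := unit_from_lb gp St.
set b := beta k.
set p := pi k.
have b0 : 0 < b := hbeta k.
have p0 : 0 < p := hpi0 k.
set Pt := nullproj Jt'.
set z := Jt'^T *m (invmx (Jt' *m Jt'^T) *m ct').
set u := Pt *m gt'.
set dstar := - (b^-1 *: u) - z.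
have := hd k; rewrite -/gt' -/ct' -/Jt' => -[hfe hopt].
have Jz : Jt' *m z = ct' by rewrite /z mulmxA (JJMi MJt).
have fe_star : ct' + Jt' *m dstar = 0.
  rewrite /dstar mulmxBr mulmxN -scalemxAr /u mulmxA (JP MJt) mul0mx scaler0 oppr0 sub0r Jz.
  by rewrite subrr.
have dE : d k = dstar.
  set h := d k - dstar.
  have e1 : Jt' *m d k = - ct' by apply/eqP; rewrite -addr_eq0 addrC hfe.
  have e2 : Jt' *m dstar = - ct' by apply/eqP; rewrite -addr_eq0 addrC fe_star.
  have Jh : Jt' *m h = 0 by rewrite /h mulmxBr e1 e2 subrr.
  have ed : d k = dstar + h by rewrite /h addrC subrK.
  clearbody h.
  have orth : b * dotv dstar h + dotv gt' h = 0.
    rewrite -dotvZl -dotvDl.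
    have -> : b *: dstar + gt' = Jt'^T *m (invmx (Jt' *m Jt'^T) *m Jt' *m gt' - b *: (invmx (Jt' *m Jt'^T) *m ct')).
      rewrite mulmxBr -scalemxAr -/z -Qx_E.
      rewrite /dstar scalerBr scalerN scalerA mulfV ?gt_eqF // scale1r.
      rewrite [in LHS](PQ_split Jt' gt') -/Pt -/u.
      by rewrite (addrC (- u)) -addrA addKr addrC.
    by rewrite dotvC dotv_mul trmxK Jh dotv0l.
  have := hopt dstar fe_star.
  rewrite -/b ed norm2_sqD dotvDr => H.
  have hb2 : b / 2 * norm2 h ^+ 2 <= 0 by lra.
  have b2 : 0 < b / 2 by rewrite divr_gt0.
  have hh : norm2 h ^+ 2 <= 0 by rewrite -(pmulr_rle0 _ b2).
  have : norm2 h = 0.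
    by apply/eqP; rewrite -sqrf_eq0 eq_le hh sqr_ge0.
  by move/norm2_eq0 => h0; rewrite h0 addr0.
rewrite dE.
have d0 : 0 < delta by rewrite invr_gt0.
have dg : delta * (gamma - epsJ) = 1 by rewrite mulVf ?gt_eqF.
have Bz : norm2 z <= delta * norm1 ct'.
  set w := invmx (Jt' *m Jt'^T) *m ct'.
  have h1 : norm2 z ^+ 2 <= norm2 w * norm2 ct'.
    by rewrite norm2_sq {1}/z -/w -dotv_mul Jz; exact: CS.
  have h2 := St w; rewrite -/z in h2.
  have h3 : (gamma - epsJ) * norm2 z <= norm2 ct'.
    have [z0|zp] := eqVneq (norm2 z) 0; first by rewrite z0 mulr0 norm2_ge0.
    have zpos : 0 < norm2 z by rewrite lt_def zp norm2_ge0.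
    rewrite -(ler_pM2l zpos).
    have := ler_wpM2r (norm2_ge0 ct') h2; have := ler_wpM2l (ltW gp) h1; lra.
  have := ler_wpM2l (ltW d0) h3; rewrite mulrA dg mul1r => h4.
  apply: le_trans h4 _; apply: ler_wpM2l; [exact: ltW | exact: norm2_le_norm1].
have Bct : norm1 ct' <= norm1 ck + epsc.
  have := norm1_triangle ck (ct' - ck); rewrite addrC subrK => h.
  by apply: le_trans h _; rewrite lerD2l; exact: hc_err.
have Bz2 : norm2 z <= delta * (norm1 ck + epsc).
  by apply: le_trans Bz _; apply: ler_wpM2l; [exact: ltW | exact: Bct].
have hgt : norm2 (gt' - gk) <= epsg := hg_err (x k).
have hgt2 : norm2 (gk - gt') <= epsg by rewrite -opprB norm2N.
have T1 : dotv gk dstar = - b^-1 * dotv gk u - dotv gt' z - dotv (gk - gt') z.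
  rewrite /dstar dotvBr dotvNr dotvZr dotvBl; ring.
have hy : `|dotv gt' z| <= (1 - tau) * p * (norm1 ck + epsc).
  have e : dotv gt' z = dotv (invmx (Jt' *m Jt'^T) *m Jt' *m gt') ct'.
    by rewrite /z dotv_mul trmxK dotv_mul Mi_tr mulmxA.
  rewrite e; apply: le_trans (dotv_inf1 _ _) _.
  have hp := hpi k; rewrite -/gt' -/Jt' -/p in hp.
  have t1 : 0 < 1 - tau by rewrite subr_gt0.
  have hN : normInf (invmx (Jt' *m Jt'^T) *m Jt' *m gt') <= (1 - tau) * p.
    by have := ler_wpM2l (ltW t1) hp; rewrite mulrA mulfV ?gt_eqF // mul1r.
  apply: le_trans (ler_wpM2r (norm1_ge0 _) hN) _.
  by apply: ler_wpM2l; [rewrite mulr_ge0 // ltW | exact: Bct].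
have hz : `|dotv (gk - gt') z| <= epsg * (delta * (norm1 ck + epsc)).
  apply: le_trans (CSabs _ _) _.
  by apply: ler_pM => //; exact: norm2_ge0.
have e0 : 0 < eta by rewrite invr_gt0.
have eg : eta * gamma = 1 by rewrite mulVf ?gt_eqF.
have Ss : forall s, norm2 s <= eta * norm2 (Jk^T *m s).
  move=> s; have := ler_wpM2l (ltW e0) (S s); by rewrite mulrA eg mul1r.
have eJt : Jt'^T = Jk^T + E^T by rewrite /E linearB /= addrC subrK.
have eJk : Jk^T = Jt'^T - E^T by rewrite /E linearB /= opprB addrC subrK.
have PB : norm2 (Pt *m gk) <= norm2 (Pk *m gk) + norm2 gk * eta * epsJ.
  set w0 := invmx (Jk *m Jk^T) *m Jk *m gk.
  have h1 := P_min MJt gk w0.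
  have e : gk - Jt'^T *m w0 = Pk *m gk - E^T *m w0.
    rewrite eJt mulmxDl {1}/w0 -Qx_E /Pk nullprojE mulmxBl mul1mx opprD addrA.
    by [].
  rewrite e in h1.
  have h2 := N2 w0.
  have h3 : norm2 w0 <= eta * norm2 gk.
    apply: le_trans (Ss w0) _; apply: ler_wpM2l; first exact: ltW.
    by rewrite /w0 -Qx_E; exact: Q_le.
  have := norm2_sub (Pk *m gk) (E^T *m w0).
  have := ler_wpM2l eJ0 h3; lra.
set th := eta * epsJ.
have th0 : 0 <= th by rewrite mulr_ge0 // ltW.
have th1 : th < 1.
  by rewrite /th -eg ltr_pM2l.
have Rb : forall s, norm2 (Pt *m (Jk^T *m s)) <= th * norm2 (Jk^T *m s).
  move=> s.
  have -> : Pt *m (Jk^T *m s) = - (Pt *m (E^T *m s)).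
    by rewrite eJk (mulmxBl (Jt'^T) (E^T) s) (mulmxBr Pt) mulmxA (PJt MJt) mul0mx sub0r.
  rewrite norm2N; apply: le_trans (P_le MJt _) _; apply: le_trans (N2 s) _.
  have := ler_wpM2l eJ0 (Ss s); rewrite /th; lra.
have Ju : Jt' *m Jk^T \in unitmx.
  apply: inj_unit => s hs.
  have hs' : Jt' *m (Jk^T *m s) = 0 by rewrite mulmxA.
  have hQ : Qm Jt' *m (Jk^T *m s) = 0 by rewrite Qx_E -mulmxA hs' !mulmx0.
  have hy2 : norm2 (Jk^T *m s) <= th * norm2 (Jk^T *m s).
    by rewrite {1}(PQ_split Jt' (Jk^T *m s)) hQ addr0; exact: Rb.
  have y0 : norm2 (Jk^T *m s) = 0.
    have := norm2_ge0 (Jk^T *m s); nra.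
  have := Ss s; rewrite y0 mulr0 => h.
  by apply: norm2_eq0; apply/eqP; rewrite eq_le h norm2_ge0.
set s0 := invmx (Jt' *m Jk^T) *m (Jt' *m gk).
set y := Jk^T *m s0.
have hJy : Jt' *m y = Jt' *m gk by rewrite /y /s0 mulmxA mulmxA mulmxV // mul1mx.
have hQy : Qm Jt' *m y = Qm Jt' *m gk by rewrite !Qx_E -!mulmxA hJy.
set U := norm2 (Qm Jt' *m gk).
set V := norm2 (Pt *m gk).
set r := Pt *m y.
set A := norm2 (Qm Jk *m gk).
have hY : norm2 y ^+ 2 = norm2 r ^+ 2 + U ^+ 2 by rewrite (pythag MJt y) hQy.
have hR : norm2 r <= th * norm2 y := Rb s0.
have hA : U ^+ 2 - norm2 r * V <= norm2 y * A.
  have e1 : dotv y gk = dotv y (Qm Jk *m gk).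
    by rewrite {1}(PQ_split Jk gk) dotvDr (dotvC y) (P_orth MJ) add0r.
  have e2 : dotv y gk = U ^+ 2 + dotv r (Pt *m gk).
    rewrite {1}(PQ_split Jt' y) {1}(PQ_split Jt' gk) hQy -/r -/Pt.
    rewrite !(dotvDl, dotvDr) (PQ_orth MJt) (dotvC (Qm Jt' *m gk) (Pt *m gk)) (PQ_orth MJt).
    by rewrite -norm2_sq -/U addr0 add0r addrC.
  have c1 : dotv y gk <= norm2 y * A by rewrite e1; exact: CS.
  have := CSabs r (Pt *m gk); rewrite ler_norml => /andP [c2 _].
  rewrite -/V in c2; lra.
have PA : norm2 (Pk *m gk) ^+ 2 - V ^+ 2 <= th * norm2 gk ^+ 2.
  have k1 : U ^+ 2 - A ^+ 2 <= th * (U ^+ 2 + V ^+ 2) := scalar_key (norm2_ge0 _) (norm2_ge0 _) (norm2_ge0 _) (norm2_ge0 _) (norm2_ge0 _) th0 th1 hY hR hA.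
  have p1 := pythag MJ gk; have p2 := pythag MJt gk.
  rewrite -/Pk -/A in p1; rewrite -/Pt -/V -/U in p2.
  rewrite (addrC (U ^+ 2) (V ^+ 2)) -p2 in k1.
  lra.
have bi0 : 0 <= b^-1 by rewrite invr_ge0 ltW.
have eu : u = Pt *m gk + Pt *m (gt' - gk) by rewrite -mulmxDr addrC subrK.
have T3 : - dotv gk u <= - V ^+ 2 + norm2 gk * epsg.
  rewrite eu dotvDr (dotv_P MJt) (dotv_Psym Jt') -/V.
  have c0 : `|dotv (Pt *m gk) (gt' - gk)| <= V * norm2 (gt' - gk) := CSabs _ _.
  move: c0; rewrite ler_norml => /andP [c1 _].
  rewrite -/Pt.
  have c2 : V * norm2 (gt' - gk) <= norm2 gk * epsg.
    by apply: ler_pM => //; [exact: norm2_ge0 | exact: norm2_ge0 | exact: P_le].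
  lra.
have Bu : norm2 u <= V + epsg.
  rewrite eu; apply: le_trans (norm2_triangle _ _) _; rewrite lerD2l.
  by apply: le_trans (P_le MJt _) _.
have Bd : norm2 dstar <= b^-1 * norm2 u + norm2 z.
  apply: le_trans (norm2_sub _ _) _.
  by rewrite norm2N norm2Z ger0_norm.
have eT2 : ck + Jk *m dstar = (ck - ct') - E *m dstar.
  rewrite -[ck + _]subr0 -fe_star opprD addrACA /E.
  by rewrite -(mulmxBl Jk Jt') -[Jk - Jt']opprB mulNmx.
have T2 : norm1 (ck + Jk *m dstar) <= epsc + epsJ * norm2 dstar.
  rewrite eT2; apply: le_trans (norm1_sub _ _) _; apply: lerD.
    by rewrite -norm1N opprB; exact: hc_err.
  exact: hE.
have I1 : dotv gk dstar <= b^-1 * (- norm2 (Pk *m gk) ^+ 2 + norm2 gk ^+ 2 * eta * epsJ + epsg * norm2 gk)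
    + (1 - tau) * p * (norm1 ck + epsc) + epsg * (delta * (norm1 ck + epsc)).
  rewrite T1.
  have h1 : - dotv gk u <= - norm2 (Pk *m gk) ^+ 2 + norm2 gk ^+ 2 * eta * epsJ + epsg * norm2 gk.
    rewrite /th in PA; lra.
  have h2 := ler_wpM2l bi0 h1.
  have h3 : - dotv gt' z <= (1 - tau) * p * (norm1 ck + epsc).
    by apply: le_trans hy; rewrite -normrN ler_norm.
  have h4 : - dotv (gk - gt') z <= epsg * (delta * (norm1 ck + epsc)).
    by apply: le_trans hz; rewrite -normrN ler_norm.
  lra.
have I2 : norm1 (ck + Jk *m dstar) <= epsc + epsJ * (delta * (norm1 ck + epsc)
      + b^-1 * (norm2 (Pk *m gk) + norm2 gk * eta * epsJ + epsg)).
  apply: le_trans T2 _; rewrite lerD2l; apply: ler_wpM2l => //.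
  apply: le_trans Bd _; rewrite addrC; apply: lerD => //.
  apply: ler_wpM2l => //; apply: le_trans Bu _; rewrite /V; lra.
have I2' := ler_wpM2l (ltW p0) I2.
rewrite (dotv_P MJ).
lra.
Qed.
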